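(* Let $R\cong \prod_{i=1}^{n} D_{i}$ be a finite direct product of rings where each $D_{i}$ is either a Dedekind domain or an Artinian, local principal ideal ring (equivalently, $R$ is a multiplication ring with finitely many minimal prime ideals), and let $1=e_1+\cdots+e_n$ be the corresponding decomposition into central orthogonal idempotents. Let $M$ be an $R$-module and $M_i:=e_iM$, so $M=\bigoplus_{i=1}^n M_i$. Then $M$ is a faithful multiplication $R$-module if and only if for each $i=1,\ldots,n$, either $M_i\cong D_i$, or $D_i$ is a Dedekind domain and $M_i\cong I_i$ for some nonzero ideal $I_i$ of $D_i$.
   Context: All rings are commutative with $1$ and all modules are unital. A ring $R$ is a multiplication ring if whenever $I,J$ are ideals of $R$ with $J\subseteq I$, there is an ideal $I'$ of $R$ with $J=I'I$. An $R$-module $M$ is a multiplication module if every submodule of $M$ equals $IM$ for some ideal $I$ of $R$. $M$ is faithful if its annihilator $\mathrm{ann}_R(M)=\{r\in R: rM=0\}$ is $0$. *)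

(* Defs.v *)
From HB Require Import structures.
From mathcomp Require Import all_boot all_order all_algebra.
Set Implicit Arguments. Unset Strict Implicit. Unset Printing Implicit Defensive.
Import GRing.Theory.
Local Open Scope ring_scope.

Section RingNotions.
Variable A : comPzRingType.

Definition is_ideal (I : A -> Prop) : Prop :=
  [/\ I 0, (forall x y, I x -> I y -> I (x + y)) & (forall a x, I x -> I (a * x))].

Definition prime_ideal (P : A -> Prop) : Prop :=
  [/\ is_ideal P, ~ P 1 & (forall a b, P (a * b) -> P a \/ P b)].

Definition maximal_ideal (P : A -> Prop) : Prop :=
  [/\ is_ideal P, ~ P 1 &
      (forall J : A -> Prop, is_ideal J -> (forall x, P x -> J x) ->
         (forall x, J x <-> P x) \/ (forall x, J x))].

Definition nonzero_ideal (I : A -> Prop) : Prop := exists x, I x /\ x != 0.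

Definition integral_domain : Prop :=
  (1 : A) != 0 /\ forall a b : A, a * b = 0 -> a = 0 \/ b = 0.

Definition noetherian_ring : Prop :=
  forall I : nat -> A -> Prop, (forall k, is_ideal (I k)) ->
    (forall k x, I k x -> I k.+1 x) ->
    exists N, forall k, (N <= k)%N -> forall x, I k x -> I N x.

Definition artinian_ring : Prop :=
  forall I : nat -> A -> Prop, (forall k, is_ideal (I k)) ->
    (forall k x, I k.+1 x -> I k x) ->
    exists N, forall k, (N <= k)%N -> forall x, I N x -> I k x.

Definition local_ring : Prop :=
  exists m : A -> Prop, maximal_ideal m /\
    forall m', maximal_ideal m' -> forall x, m' x <-> m x.

Definition principal_ideal_ring : Prop :=
  forall I : A -> Prop, is_ideal I -> exists a, forall x, I x <-> exists r, x = r * a.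

(* Integrally closed in its field of fractions, unfolded: if a/b (b <> 0)
   is a root of a monic polynomial X^n + sum_{i<n} c_i X^i over A,
   i.e. a^n + sum_{i<n} c_i a^i b^(n-i) = 0, then a/b lies in A, i.e. b | a. *)
Definition integrally_closed : Prop :=
  forall (a b : A) (n : nat) (c : 'I_n -> A), b != 0 ->
    a ^+ n + \sum_(i < n) c i * a ^+ i * b ^+ (n - i) = 0 ->
    exists r, a = r * b.

Definition dedekind_domain : Prop :=
  [/\ integral_domain, noetherian_ring, integrally_closed &
      (forall P, prime_ideal P -> nonzero_ideal P -> maximal_ideal P)].

Definition artinian_local_pir : Prop :=
  [/\ artinian_ring, local_ring & principal_ideal_ring].

End RingNotions.

Section ModuleNotions.
Variables (R : comPzRingType) (M : lmodType R).

Definition is_submodule (N : M -> Prop) : Prop :=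
  [/\ N 0, (forall x y, N x -> N y -> N (x + y)) & (forall r x, N x -> N (r *: x))].

Definition ideal_times_module (I : R -> Prop) (x : M) : Prop :=
  exists s : seq (R * M), foldr (fun p P => I p.1 /\ P) True s /\
    x = \sum_(p <- s) p.1 *: p.2.

Definition multiplication_module : Prop :=
  forall N : M -> Prop, is_submodule N ->
    exists I : R -> Prop, is_ideal I /\ forall x, N x <-> ideal_times_module I x.

Definition faithful_module : Prop :=
  forall r : R, (forall m : M, r *: m = 0) -> r = 0.

Definition scaled_part (e : R) (x : M) : Prop := exists m : M, x = e *: m.

(* The R-submodule N of M is isomorphic (as R-module) to the ideal I of A,
   where A is an R-module via the ring morphism pi : R -> A. *)
Definition iso_to_ideal (A : comPzRingType) (pi : R -> A)
    (N : M -> Prop) (I : A -> Prop) : Prop :=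
  exists f : M -> A,
    [/\ (forall x y, N x -> N y -> f (x + y) = f x + f y),
        (forall r x, N x -> f (r *: x) = pi r * f x),
        (forall x y, N x -> N y -> f x = f y -> x = y),
        (forall x, N x -> I (f x)) &
        (forall a, I a -> exists x, N x /\ f x = a)].

End ModuleNotions.

(* Main.v *)
Require Import Defs.
From HB Require Import structures.
From mathcomp Require Import all_boot all_order all_algebra.
From mathcomp Require Import ring.
From Stdlib Require Import Classical ClassicalEpsilon.
From Stdlib Require Lists.List.
Set Implicit Arguments. Unset Strict Implicit. Unset Printing Implicit Defensive.
Import GRing.Theory.
Local Open Scope ring_scope.


Lemma idl0 (A : comPzRingType) (I : A -> Prop) : is_ideal I -> I 0.
Proof. by case. Qed.
Lemma idlD (A : comPzRingType) (I : A -> Prop) x y : is_ideal I -> I x -> I y -> I (x + y).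
Proof. by case=> _ h _; apply: h. Qed.
Lemma idlMl (A : comPzRingType) (I : A -> Prop) a x : is_ideal I -> I x -> I (a * x).
Proof. by case=> _ _ h; apply: h. Qed.
Lemma idlMr (A : comPzRingType) (I : A -> Prop) a x : is_ideal I -> I x -> I (x * a).
Proof. by move=> hI hx; rewrite mulrC; apply: idlMl. Qed.
Lemma idlN (A : comPzRingType) (I : A -> Prop) x : is_ideal I -> I x -> I (- x).
Proof. by move=> hI hx; rewrite -mulN1r; apply: idlMl. Qed.
Lemma idlB (A : comPzRingType) (I : A -> Prop) x y : is_ideal I -> I x -> I y -> I (x - y).
Proof. by move=> hI hx hy; apply: idlD => //; apply: idlN. Qed.

Arguments idl0 {A I}.
Arguments idlD {A I x y}.
Arguments idlMl {A I a x}.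
Arguments idlMr {A I a x}.
Arguments idlN {A I x}.
Arguments idlB {A I x y}.

Definition prI (A : comPzRingType) (a : A) := fun x : A => exists r, x = r * a.
Lemma prI_ideal (A : comPzRingType) (a : A) : is_ideal (prI a).
Proof.
split; first by exists 0; rewrite mul0r.
- by move=> x y [r ->] [s ->]; exists (r + s); rewrite mulrDl.
- by move=> b x [r ->]; exists (b * r); rewrite mulrA.
Qed.

Lemma max_principle (A : comPzRingType) (Phi : (A -> Prop) -> Prop) :
  noetherian_ring A -> (exists I, is_ideal I /\ Phi I) ->
  exists I, [/\ is_ideal I, Phi I & forall J, is_ideal J -> Phi J ->
     (forall x, I x -> J x) -> forall x, J x -> I x].
Proof.
move=> hN [I0 [hI0 hP0]].
apply: NNPP => hno.
pose T := {I : A -> Prop | is_ideal I /\ Phi I}.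
have step : forall I : T, exists J : T, (forall x, sval I x -> sval J x) /\
    exists x, sval J x /\ ~ sval I x.
{ move=> [I [hI hP]]; apply: NNPP => hn; apply: hno; exists I; split => // J hJ hPJ hIJ x hJx.
  apply: NNPP => hIx; apply: hn; exists (exist _ J (conj hJ hPJ)); split => //; by exists x. }
pose next (I : T) : T := proj1_sig (constructive_indefinite_description _ (step I)).
have hnext I : (forall x, sval I x -> sval (next I) x) /\
    exists x, sval (next I) x /\ ~ sval I x.
  exact: (proj2_sig (constructive_indefinite_description _ (step I))).
pose ch k := sval (iter k next (exist _ I0 (conj hI0 hP0))).
have [N hNk] := hN ch (fun k => proj1 (proj2_sig (iter k next _)))
  (fun k => proj1 (hnext (iter k next _))).
have [x [h1 h2]] := proj2 (hnext (iter N next (exist _ I0 (conj hI0 hP0)))).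
by apply: h2; apply: (hNk N.+1).
Qed.

Definition pcont (A : comPzRingType) (Ps : seq (A -> Prop)) (I : A -> Prop) :=
  forall xs : seq A, List.Forall2 (fun (P : A -> Prop) x => P x) Ps xs -> I (\prod_(x <- xs) x).
Definition nzprime (A : comPzRingType) (P : A -> Prop) := prime_ideal P /\ nonzero_ideal P.

Lemma contains_primes (A : comPzRingType) : noetherian_ring A ->
  forall I, is_ideal I -> nonzero_ideal I ->
  exists Ps, List.Forall (@nzprime A) Ps /\ pcont Ps I.
Proof.
move=> hN I0 hI0 hnz0; apply: NNPP => hno.
have [I [hI [hnz hP] hmax]] := @max_principle _
  (fun I => nonzero_ideal I /\ ~ exists Ps, List.Forall (@nzprime A) Ps /\ pcont Ps I) hN
  (ex_intro _ I0 (conj hI0 (conj hnz0 hno))).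
have h1 : ~ I 1.
  move=> h1; apply: hP; exists [::]; split => // xs hxs.
  by inversion hxs; rewrite big_nil.
have hnp : ~ prime_ideal I.
  move=> hpr; apply: hP; exists [:: I]; split; first by constructor.
  move=> xs hxs; inversion hxs; subst; inversion H3; subst.
  by rewrite big_cons big_nil mulr1.
have [x [y [hxy [hx hy]]]] : exists x y, I (x * y) /\ ~ I x /\ ~ I y.
  apply: NNPP => hc; apply: hnp; split => // a b hab.
  apply: NNPP => hn; apply: hc; exists a, b; split => //; split => hh; apply: hn; tauto.
pose Iz (z : A) := fun w => exists i r, I i /\ w = i + r * z.
have Iz_ideal z : is_ideal (Iz z).
  split; first by exists 0, 0; rewrite mul0r addr0; split => //; apply: idl0.
  - move=> u v [i [r [hi ->]]] [i' [r' [hi' ->]]]; exists (i + i'), (r + r'); split.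
      exact: idlD.
    by rewrite mulrDl addrACA.
  - move=> b u [i [r [hi ->]]]; exists (b * i), (b * r); split; first exact: idlMl.
    by rewrite mulrDr mulrA.
have Iz_sup z w : I w -> Iz z w by move=> hw; exists w, 0; rewrite mul0r addr0.
have Iz_z z : Iz z z by exists 0, 1; rewrite add0r mul1r; split => //; apply: idl0.
have getPs z : ~ I z -> exists Ps, List.Forall (@nzprime A) Ps /\ pcont Ps (Iz z).
  move=> hz; apply: NNPP => hn.
  apply: hz; apply: (hmax (Iz z) (Iz_ideal z) _ (Iz_sup z) z (Iz_z z)).
  split => //; case: hnz => w [hw hw0]; exists w; split => //; exact: Iz_sup.
have [Ps [hPs cPs]] := getPs x hx.
have [Qs [hQs cQs]] := getPs y hy.
apply: hP; exists (Ps ++ Qs); split; first by apply/List.Forall_app.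
move=> xs hxs.
have [xs1 [xs2 [h1' [h2' ->]]]] := List.Forall2_app_inv_l _ _ hxs.
rewrite big_cat /=.
have [i1 [r1 [hi1 ->]]] := cPs _ h1'.
have [i2 [r2 [hi2 ->]]] := cQs _ h2'.
have -> : (i1 + r1 * x) * (i2 + r2 * y) = i1 * (i2 + r2 * y) + (r1 * x * i2 + r1 * r2 * (x * y)).
  by ring.
apply: idlD => //; first exact: idlMr.
by apply: idlD => //; [apply: idlMl | apply: idlMl].
Qed.


Lemma dom_cancel (A : comPzRingType) (c x y : A) : integral_domain A -> c != 0 ->
  c * x = c * y -> x = y.
Proof.
move=> [_ hd] hc h; have : c * (x - y) = 0 by rewrite mulrBr h subrr.
by case/hd => [/eqP|/eqP]; rewrite ?(negbTE hc) // subr_eq0 => /eqP.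
Qed.

Lemma dom_mul_neq0 (A : comPzRingType) (x y : A) : integral_domain A -> x != 0 -> y != 0 -> x * y != 0.
Proof. by move=> [_ hd] hx hy; apply/eqP => /hd [] /eqP; rewrite ?(negbTE hx) ?(negbTE hy). Qed.

Lemma det_trick (A : comPzRingType) : integral_domain A -> noetherian_ring A -> integrally_closed A ->
  forall (I : A -> Prop) (p0 a j : A), is_ideal I -> I p0 -> p0 != 0 -> a != 0 ->
  (forall x, I x -> exists y, I y /\ j * x = a * y) -> exists r, j = r * a.
Proof.
move=> hd hN hic I p0 a j hI hp0 p0n0 an0 hj.
have pw k : exists y, I y /\ j ^+ k * p0 = a ^+ k * y.
  elim: k => [|k [y [hy hk]]].
    by exists p0; split => //; rewrite !expr0 !mul1r.
  have [z [hz hjz]] := hj y hy; exists z; split => //.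
  rewrite exprS -mulrA hk mulrCA hjz exprS; ring.
pose J (m : nat) (x : A) := exists d : nat -> A,
  x * a ^+ m = p0 * \sum_(i < m.+1) d i * j ^+ i * a ^+ (m - i).
have hJ m : is_ideal (J m).
  split.
  - by exists (fun _ => 0); rewrite mul0r big1 ?mulr0 // => i _; rewrite !mul0r.
  - move=> x y [d hd'] [d' hd'']; exists (fun i => d i + d' i).
    rewrite mulrDl hd' hd'' -mulrDr -big_split /=; congr (_ * _); apply: eq_bigr => i _.
    by rewrite !mulrDl.
  - move=> b x [d hd']; exists (fun i => b * d i).
    rewrite -mulrA hd' mulrCA mulr_sumr; congr (_ * _); apply: eq_bigr => i _.
    by rewrite !mulrA.
have hJinc m x : J m x -> J m.+1 x.
  move=> [d hd']; exists (fun i => if (i <= m)%N then d i else 0).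
  rewrite big_ord_recr /= ltnn mul0r mul0r addr0 exprS mulrCA hd' mulrCA mulr_sumr.
  congr (_ * _); apply: eq_bigr => i _ /=.
  have him : (i <= m)%N by rewrite -ltnS.
  by rewrite him subSn // exprS mulrCA.
have [N hN'] := hN J hJ hJinc.
have [y [hy hyN]] := pw N.+1.
have hyJ : J N.+1 y.
  exists (fun i => if i == N.+1 then 1 else 0).
  rewrite big_ord_recr /= eqxx subnn expr0 mulr1 mul1r big1 ?add0r.
    by rewrite mulrC -hyN mulrC.
  by move=> i _; rewrite eqn_leq (leqNgt N.+1) ltn_ord andbF !mul0r.
have [d hd'] := hN' N.+1 (leqnSn N) y hyJ.
have key : p0 * (j ^+ N.+1 + \sum_(i < N.+1) (- d i) * j ^+ i * a ^+ (N.+1 - i)) = p0 * 0.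
  rewrite mulr0 mulrDr -(mulrC (j ^+ N.+1)) hyN.
  have -> : a ^+ N.+1 * y = a * (y * a ^+ N) by rewrite exprS mulrCA mulrA mulrC mulrA.
  rewrite hd' mulrCA mulr_sumr -mulrDr.
  rewrite -big_split /= big1 ?mulr0 // => i _.
  have hi : (i <= N)%N by rewrite -ltnS.
  rewrite subSn // exprS; ring.
have := dom_cancel hd p0n0 key.
move/(hic j a N.+1 (fun i => - d i) an0) => [r hr]; by exists r.
Qed.


Definition prodI (A : comPzRingType) (I J : A -> Prop) (x : A) :=
  exists s : seq (A * A), foldr (fun p P => I p.1 /\ J p.2 /\ P) True s /\
    x = \sum_(p <- s) p.1 * p.2.

Lemma prodI_ideal (A : comPzRingType) (I J : A -> Prop) : is_ideal I -> is_ideal (prodI I J).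
Proof.
move=> hI; split.
- by exists [::]; rewrite big_nil.
- move=> x y [s [hs ->]] [t [ht ->]]; exists (s ++ t); rewrite big_cat; split => //.
  by elim: s hs => //= p s IH [h1 [h2 h3]]; split => //; split => //; apply: IH.
- move=> a x [s [hs ->]]; exists [seq (a * p.1, p.2) | p <- s]; split.
    elim: s hs => //= p s IH [h1 [h2 h3]]; split; first exact: idlMl.
    by split => //; apply: IH.
  by rewrite big_map mulr_sumr; apply: eq_bigr => p _ /=; rewrite mulrA.
Qed.

Arguments prodI_ideal {A I J}.

Lemma prodI_single (A : comPzRingType) (I J : A -> Prop) x y : I x -> J y -> prodI I J (x * y).
Proof. by move=> hx hy; exists [:: (x, y)]; rewrite big_cons big_nil addr0. Qed.

Lemma prodI_ind (A : comPzRingType) (I J K : A -> Prop) : is_ideal K ->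
  (forall x y, I x -> J y -> K (x * y)) -> forall z, prodI I J z -> K z.
Proof.
move=> hK h z [s [hs ->]]; elim: s hs => [|p s IH] /= hs; first by rewrite big_nil; apply: idl0.
by case: hs => [h1 [h2 h3]]; rewrite big_cons; apply: idlD => //; [apply: h | apply: IH].
Qed.

Lemma ideal_pre (A : comPzRingType) (K : A -> Prop) (x : A) : is_ideal K -> is_ideal (fun z => K (x * z)).
Proof.
move=> hK; split; first by rewrite mulr0; apply: idl0.
- by move=> u v hu hv; rewrite mulrDr; apply: idlD.
- by move=> b u hu; rewrite mulrCA; apply: idlMl.
Qed.

Lemma ideal_ex (A : comPzRingType) (K : A -> Prop) (y c : A) : is_ideal K ->
  is_ideal (fun z => exists w, K w /\ z * y = c * w).
Proof.
move=> hK; split; first by exists 0; rewrite mul0r mulr0; split => //; apply: idl0.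
- move=> u v [w [hw hu]] [w' [hw' hv]]; exists (w + w'); split; first exact: idlD.
  by rewrite mulrDl hu hv mulrDr.
- move=> b u [w [hw hu]]; exists (b * w); split; first exact: idlMl.
  by rewrite -mulrA hu mulrCA.
Qed.

Definition invertible (A : comPzRingType) (I : A -> Prop) := exists J c, [/\ is_ideal J, c != 0,
   (forall x y, I x -> J y -> prI c (x * y)) & prodI I J c].

Lemma min_nat (P : nat -> Prop) : (exists n, P n) -> exists n, P n /\ forall m, P m -> (n <= m)%N.
Proof.
move=> [n hn]; apply: NNPP => hno; move: n hn.
suff : forall n, ~ P n by move=> h n /h.
elim/ltn_ind => n IH hn; apply: hno; exists n; split => // m hm.
by rewrite leqNgt; apply/negP => /IH.
Qed.

Lemma exists_maximal (A : comPzRingType) : noetherian_ring A -> forall I, is_ideal I -> ~ I 1 ->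
  exists P : A -> Prop, maximal_ideal P /\ forall x, I x -> P x.
Proof.
move=> hN I hI h1.
have [P [hP [hIP hP1] hmax]] := @max_principle _ (fun J => (forall x, I x -> J x) /\ ~ J 1) hN
   (ex_intro _ I (conj hI (conj (fun x h => h) h1))).
exists P; split => //; split => // J hJ hPJ.
case: (classic (J 1)) => hJ1.
  by right => x; rewrite -[x]mulr1; apply: idlMl.
left => x; split; last exact: hPJ.
apply: hmax => //; split => // y hy; apply: hPJ; exact: hIP.
Qed.

Lemma prime_prod (A : comPzRingType) (P : A -> Prop) (Ps : seq (A -> Prop)) : prime_ideal P ->
  (forall Q, List.In Q Ps -> exists x, Q x /\ ~ P x) ->
  exists xs, List.Forall2 (fun (Q : A -> Prop) x => Q x) Ps xs /\ ~ P (\prod_(x <- xs) x).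
Proof.
move=> [hP hP1 hpr]; elim: Ps => [|Q Ps IH] h.
  by exists [::]; split; [constructor | rewrite big_nil].
have [x [hx hnx]] := h Q (or_introl erefl).
have [xs [h1 h2]] := IH (fun Q' hQ' => h Q' (or_intror hQ')).
exists (x :: xs); split; first by constructor.
by rewrite big_cons => /hpr [].
Qed.

Definition dedekind_hyps (A : comPzRingType) :=
  [/\ integral_domain A, noetherian_ring A, integrally_closed A &
      (forall P : A -> Prop, prime_ideal P -> nonzero_ideal P -> maximal_ideal P)].


Lemma maximal_invertible (A : comPzRingType) : dedekind_hyps A ->
  forall P : A -> Prop, maximal_ideal P -> nonzero_ideal P -> invertible P.
Proof.
move=> [hd hN hic hpm] P hPm [a [hPa an0]].
have hPm' := hPm; case: hPm' => hP hP1 hPmax.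
have hPpr : prime_ideal P.
  split => // x y hxy; apply: NNPP => hn.
  have hx : ~ P x by tauto.
  have hy : ~ P y by tauto.
  pose Px := fun z => exists p s, P p /\ z = p + s * x.
  have hPx : is_ideal Px.
    split; first by exists 0, 0; rewrite mul0r addr0; split => //; apply: idl0.
    - move=> u v [i [r [hi ->]]] [i' [r' [hi' ->]]]; exists (i + i'), (r + r'); split.
        exact: idlD.
      by rewrite mulrDl addrACA.
    - move=> c u [i [r [hi ->]]]; exists (c * i), (c * r); split; first exact: idlMl.
      by rewrite mulrDr mulrA.
  case: (hPmax Px hPx).
  - by move=> z hz; exists z, 0; rewrite mul0r addr0.
  - by move=> h; apply: hx; apply/h; exists 0, 1; rewrite mul1r add0r; split => //; apply: idl0.
  move=> h; have [p [s [hp e1]]] := h 1.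
  apply: hy; have -> : y = p * y + s * (x * y) by rewrite mulrA -mulrDl -e1 mul1r.
  apply: (idlD hP).
  exact: (idlMr hP hp). exact: (idlMl hP hxy).
have hex : exists k, exists Ps, [/\ size Ps = k, List.Forall (@nzprime A) Ps & pcont Ps (prI a)].
  have [Ps [h1 h2]] := contains_primes hN (prI_ideal a) (ex_intro _ a (conj (ex_intro _ 1 (esym (mul1r a))) an0)).
  by exists (size Ps), Ps.
have [k [[Ps [hsz hPs hcPs]] hmin]] := min_nat hex.
have [Q [hQin hQP]] : exists Q, List.In Q Ps /\ forall x, Q x -> P x.
  apply: NNPP => hn.
  have hw : forall Q, List.In Q Ps -> exists x, Q x /\ ~ P x.
    move=> Q hQ; apply: NNPP => hn'; apply: hn; exists Q; split => // x hx; apply: NNPP => hnx; apply: hn'.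
    by exists x.
  have [xs [h1 h2]] := prime_prod hPpr hw.
  apply: h2; have [r ->] := hcPs xs h1; exact: idlMl.
have [hQpr hQnz] : nzprime Q by move/List.Forall_forall: hPs; apply.

have [hQ _ hQmax] := hpm Q hQpr hQnz.
have hPQ : forall x, P x -> Q x.
  case: (hQmax P hP hQP) => h; first by move=> x /h.
  by case: hP1; apply: h.
have [l1 [l2 hPsE]] := List.in_split _ _ hQin.
have [xs [hxs hnb]] : exists xs, List.Forall2 (fun (Q : A -> Prop) x => Q x) (l1 ++ l2) xs /\
    ~ prI a (\prod_(x <- xs) x).
  apply: NNPP => hn.
  have : (k <= size (l1 ++ l2))%N.
    apply: hmin; exists (l1 ++ l2); split => //.
      move: hPs; rewrite hPsE => /List.Forall_app [h1 h2]; apply/List.Forall_app; split => //.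
      by inversion h2.
    move=> ys hys; apply: NNPP => hy; apply: hn; by exists ys.
  by rewrite -hsz hPsE !size_cat /= addnS ltnn.
pose b := \prod_(x <- xs) x.
have hbP : forall p, P p -> prI a (b * p).
  move=> p hp.
  have [xs1 [xs2 [h1 [h2 hE]]]] := List.Forall2_app_inv_l _ _ hxs.
  have hF : List.Forall2 (fun (Q : A -> Prop) x => Q x) Ps (xs1 ++ p :: xs2).
    by rewrite hPsE; apply: List.Forall2_app => //; constructor => //; apply: hPQ.
  have [r hr] := hcPs _ hF.
  exists r; rewrite -hr /b hE !big_cat big_cons /=; ring.
pose S := fun y => exists q, P q /\ a * y = b * q.
have hS : is_ideal S.
  split; first by exists 0; rewrite !mulr0; split => //; apply: idl0.
  - move=> u v [w [hw hu]] [w' [hw' hv]]; exists (w + w'); split; first exact: idlD.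
    by rewrite !mulrDr hu hv.
  - move=> c u [w [hw hu]]; exists (c * w); split; first exact: idlMl.
    by rewrite mulrCA hu mulrCA.
case: (classic (forall y, S y -> P y)) => hSP.
  case: hnb; rewrite -/b.
  have [r ->] := det_trick hd hN hic hP hPa an0 an0 (j := b) (fun x hx => ltac:(
    have [r hr] := hbP x hx; exists r; split; [apply: hSP; exists x; split => //; rewrite hr mulrC //|
      by rewrite hr mulrC])).
  by exists r.
have [y [hSy hny]] : exists y, S y /\ ~ P y.
  apply: NNPP => hn; apply: hSP => y hy; apply: NNPP => hny; apply: hn; by exists y.
pose Py := fun z => exists p s, P p /\ z = p + s * y.
have hPy : is_ideal Py.
  split; first by exists 0, 0; rewrite mul0r addr0; split => //; apply: idl0.
  - move=> u v [i [r [hi ->]]] [i' [r' [hi' ->]]]; exists (i + i'), (r + r'); split.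
      exact: idlD.
    by rewrite mulrDl addrACA.
  - move=> c u [i [r [hi ->]]]; exists (c * i), (c * r); split; first exact: idlMl.
    by rewrite mulrDr mulrA.
have [p [s [hp e1]]] : Py 1.
  case: (hPmax Py hPy).
  - by move=> z hz; exists z, 0; rewrite mul0r addr0.
  - by move=> h; case: hny; apply/h; exists 0, 1; rewrite mul1r add0r; split => //; apply: idl0.
  by move=> h; apply: h.
have [q [hq hyq]] := hSy.
pose J := fun x => forall p, P p -> prI a (x * p).
have hJ : is_ideal J.
  split.
  - by move=> u _; exists 0; rewrite !mul0r.
  - by move=> u v hu hv w hw; rewrite mulrDl; apply: idlD; [apply: prI_ideal | apply: hu | apply: hv].
  - by move=> c u hu w hw; rewrite -mulrA; apply: idlMl; [apply: prI_ideal | apply: hu].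
exists J, a; split => //.
- by move=> x z hx hz; rewrite mulrC; apply: hz.
- have -> : a = p * a + q * (s * b).
    rewrite -{1}[a]mulr1 e1 mulrDr (mulrCA a s y) hyq; ring.
  apply: idlD; first exact: prodI_ideal.
    by apply: prodI_single => // z hz; rewrite mulrC; exists z.
  apply: prodI_single => // z hz; rewrite -mulrA; apply: idlMl; first exact: prI_ideal.
  exact: hbP.
Qed.


Lemma ideal_prer (A : comPzRingType) (K : A -> Prop) (x : A) : is_ideal K -> is_ideal (fun z => K (z * x)).
Proof.
move=> hK; have := ideal_pre x hK; case=> h0 hD hM; split.
- by rewrite mul0r; apply: idl0.
- by move=> u v hu hv; rewrite mulrDl; apply: idlD.
- by move=> b u hu; rewrite -mulrA; apply: idlMl.
Qed.

Lemma prodI_assoc (A : comPzRingType) (I J J' : A -> Prop) z v : is_ideal I ->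
  prodI I J z -> J' v -> prodI I (prodI J J') (z * v).
Proof.
move=> hI hz hv.
apply: (prodI_ind (K := fun z => prodI I (prodI J J') (z * v))) hz.
  by apply: ideal_prer; apply: prodI_ideal.
move=> x y hx hy; rewrite -mulrA; apply: prodI_single => //.
exact: prodI_single.
Qed.

Lemma all_invertible (A : comPzRingType) : dedekind_hyps A ->
  forall I : A -> Prop, is_ideal I -> nonzero_ideal I -> invertible I.
Proof.
move=> hDed; have [hd hN hic hpm] := hDed.
move=> I0 hI0 hnz0; apply: NNPP => hno.
have [I [hI [hnz hP] hmax]] := @max_principle _
  (fun I => nonzero_ideal I /\ ~ invertible I) hN
  (ex_intro _ I0 (conj hI0 (conj hnz0 hno))).
have h1 : ~ I 1.
  move=> h1; apply: hP; exists (fun _ => True), 1; split.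
  - by split.
  - exact: hd.1.
  - by move=> x y _ _; exists (x * y); rewrite mulr1.
  - by rewrite -[1]mulr1; apply: prodI_single.
have [P [hPm hIP]] := exists_maximal hN hI h1.
have hPnz : nonzero_ideal P by case: hnz => x [hx hx0]; exists x; split => //; apply: hIP.
have [J [a [hJ an0 hPJ hPJa]]] := maximal_invertible hDed hPm hPnz.
have hPm' := hPm; case: hPm' => hPi hP1 _.
pose I' := fun x => prodI I J (a * x).
have hI' : is_ideal I' := ideal_pre a (prodI_ideal (J := J) hI).
have hII' : forall x, I x -> I' x.
  move=> x hx; rewrite /I' mulrC.
  apply: (prodI_ind (K := fun z => prodI I J (x * z))) hPJa.
    exact: (ideal_pre x (prodI_ideal (J := J) hI)).
  move=> u v hu hv; rewrite mulrA; apply: prodI_single => //; exact: (idlMr hI hx).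
have hIJa : forall z, prodI I J z -> prI a z.
  exact: (prodI_ind (prI_ideal a) (fun x y hx hy => hPJ x y (hIP x hx) hy)).
case: (classic (forall x, I' x -> I x)) => hcase.
  have [p0 [hp0 p0n0]] := hnz.
  have hjdiv : forall j, J j -> exists r, j = r * a.
    move=> j hj; apply: (det_trick hd hN hic hI hp0 p0n0 an0) => x hx.
    have [u hu] := hIJa _ (prodI_single hx hj).
    exists u; split; last by rewrite mulrC hu mulrC.
    apply: hcase; rewrite /I' mulrC -hu; exact: prodI_single.
  have [p [hp hpa]] : exists p, P p /\ a = p * a.
    apply: (prodI_ind (K := fun z => exists p, P p /\ z = p * a)) hPJa.
      split; first by exists 0; rewrite mul0r; split => //; apply: idl0.
      - move=> u v [w [hw ->]] [w' [hw' ->]]; exists (w + w'); rewrite mulrDl; split => //.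
        exact: idlD.
      - move=> b u [w [hw ->]]; exists (b * w); rewrite mulrA; split => //; exact: idlMl.
    move=> x y hx hy; have [r ->] := hjdiv y hy; exists (x * r); split; first exact: idlMr.
    by rewrite mulrA.
  apply: hP1.
  have : a * 1 = a * p by rewrite mulr1 mulrC -hpa.
  by move/(dom_cancel hd an0) => ->.
have [x [hx hnx]] : exists x, I' x /\ ~ I x.
  apply: NNPP => hn; apply: hcase => x hx; apply: NNPP => hnx; apply: hn; by exists x.
have hinv' : invertible I'.
  apply: NNPP => hn'; apply: hnx; apply: (hmax I' hI') => //; split => //.
  case: hnz => w [hw hw0]; exists w; split => //; exact: hII'.
have [J' [c' [hJ' c'n0 hIJ' hIJc']]] := hinv'.
apply: hP; exists (prodI J J'), (a * c'); split.
- exact: prodI_ideal.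
- exact: dom_mul_neq0.
- move=> x0 y hx0 hy.
  apply: (prodI_ind (K := fun y => prI (a * c') (x0 * y))) hy.
    exact: (ideal_pre x0 (prI_ideal _)).
  move=> u v hu hv.
  have [w hw] := hIJa _ (prodI_single hx0 hu).
  have hw' : I' w by rewrite /I' mulrC -hw; exact: prodI_single.
  have [t ht] := hIJ' _ _ hw' hv.
  by exists t; rewrite mulrA hw mulrAC ht; ring.
- apply: (prodI_ind (K := fun z => prodI I (prodI J J') (a * z))) hIJc'.
    exact: (ideal_pre a (prodI_ideal (J := prodI J J') hI)).
  move=> u v hu hv; rewrite mulrA; exact: prodI_assoc hI hu hv.
Qed.

Lemma mult_ideal (A : comPzRingType) : dedekind_hyps A ->
  forall I : A -> Prop, is_ideal I -> nonzero_ideal I ->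
  forall K : A -> Prop, is_ideal K -> (forall x, K x -> I x) ->
  exists L : A -> Prop, is_ideal L /\ forall x, K x <-> prodI L I x.
Proof.
move=> hDed I hI hnz K hK hKI; have [hd _ _ _] := hDed.
have [J' [c [hJ' cn0 hIJ hc]]] := all_invertible hDed hI hnz.
pose L := fun x => prodI K J' (c * x).
have hL : is_ideal L := ideal_pre c (prodI_ideal hK).
exists L; split => // k; split.
- move=> hk.
  have [w [hw hcw]] : exists w, prodI L I w /\ c * k = c * w.
    apply: (prodI_ind (K := fun z => exists w, prodI L I w /\ z * k = c * w)) hc.
      exact: ideal_ex (prodI_ideal hL).
    move=> u v hu hv.
    have [t ht] := hIJ _ _ (hKI k hk) hv.
    have hLt : L t by rewrite /L mulrC -ht; apply: prodI_single.
    exists (t * u); split; first exact: prodI_single.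
    by rewrite -mulrA (mulrC v) ht; ring.
  by rewrite (dom_cancel hd cn0 hcw).
- move=> hk; apply: (prodI_ind (K := K)) hk => // l i hl hi.
  have [w [hw hcw]] : exists w, K w /\ (c * l) * i = c * w.
    apply: (prodI_ind (K := fun z => exists w, K w /\ z * i = c * w)) hl.
      exact: ideal_ex.
    move=> k0 j hk0 hj; have [t ht] := hIJ _ _ hi hj.
    exists (t * k0); split; first exact: idlMl.
    by rewrite -mulrA (mulrC j) ht; ring.
  by rewrite -mulrA in hcw; rewrite (dom_cancel hd cn0 hcw).
Qed.


Lemma pir_noeth (A : comPzRingType) : principal_ideal_ring A -> noetherian_ring A.
Proof.
move=> hP I hI hinc.
have hmono k l : (k <= l)%N -> forall x, I k x -> I l x.
  move=> /subnK <-; elim: (l - k)%N => [|d IH] x hx //=; rewrite addSn; apply: hinc; exact: IH.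
pose U := fun x => exists k, I k x.
have hU : is_ideal U.
  split; first by exists 0%N; apply: idl0 (hI 0%N).
  - move=> x y [k hx] [l hy]; exists (maxn k l); apply: idlD (hI _) _ _.
      by apply: hmono hx; rewrite leq_maxl.
    by apply: hmono hy; rewrite leq_maxr.
  - by move=> a x [k hx]; exists k; apply: idlMl (hI k) hx.
have [a ha] := hP U hU.
have [N hN] : U a by apply/ha; exists 1; rewrite mul1r.
exists N => k hk x hx.
have [r ->] : exists r, x = r * a by apply/ha; exists k.
exact: idlMl (hI N) hN.
Qed.

Lemma local_units (A : comPzRingType) (m : A -> Prop) : noetherian_ring A -> maximal_ideal m ->
  (forall m' : A -> Prop, maximal_ideal m' -> forall x, m' x <-> m x) ->
  forall J : A -> Prop, is_ideal J -> ~ (forall x, J x -> m x) -> J 1.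
Proof.
move=> hN hm hu J hJ hnJ; apply: NNPP => hJ1.
have [P [hP hJP]] := exists_maximal hN hJ hJ1.
by apply: hnJ => x /hJP /(hu P hP x).
Qed.

Lemma nilp_t (A : comPzRingType) (m : A -> Prop) (t : A) : artinian_ring A -> noetherian_ring A ->
  maximal_ideal m ->
  (forall m' : A -> Prop, maximal_ideal m' -> forall x, m' x <-> m x) ->
  (forall x, m x <-> exists r, x = r * t) -> exists N, t ^+ N = 0.
Proof.
move=> hA hN hm hu ht.
pose Ik k := prI (t ^+ k).
have hdec : forall k x, Ik k.+1 x -> Ik k x.
  by move=> k x [r ->]; exists (r * t); rewrite exprS mulrCA mulrA (mulrC t).
have [N hNk] := hA Ik (fun k => prI_ideal _) hdec.
have [r hr] : Ik N.+1 (t ^+ N) by apply: hNk => //; exists 1; rewrite mul1r.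
have hmt : m t by apply/ht; exists 1; rewrite mul1r.
have hm1 : ~ m 1 by case: hm.
have hmI : is_ideal m by case: hm.
have [u hu1] : prI (1 - r * t) 1.
  apply: (local_units hN hm hu (prI_ideal _)) => hsub.
  apply: hm1; have := hsub (1 - r * t) (ex_intro _ 1 (esym (mul1r _))).
  move=> h; have := idlD hmI h (idlMl hmI (a := r) hmt); by rewrite subrK.
have h0 : t ^+ N - r * t ^+ N.+1 = 0 by rewrite -hr subrr.
exists N; rewrite -[t ^+ N]mulr1 hu1.
have -> : t ^+ N * (u * (1 - r * t)) = u * (t ^+ N - r * t ^+ N.+1) by rewrite exprS; ring.
by rewrite h0 mulr0.
Qed.


Lemma sub0 (R : comPzRingType) (M : lmodType R) (N : M -> Prop) : is_submodule N -> N 0.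
Proof. by case. Qed.
Lemma subD (R : comPzRingType) (M : lmodType R) (N : M -> Prop) x y : is_submodule N -> N x -> N y -> N (x + y).
Proof. by case=> _ h _; apply: h. Qed.
Lemma subZ (R : comPzRingType) (M : lmodType R) (N : M -> Prop) r x : is_submodule N -> N x -> N (r *: x).
Proof. by case=> _ _ h; apply: h. Qed.
Arguments sub0 {R M N}.
Arguments subD {R M N x y}.
Arguments subZ {R M N r x}.

Lemma sub_sum (R : comPzRingType) (M : lmodType R) (N : M -> Prop) (n : nat) (F : 'I_n -> M) :
  is_submodule N -> (forall i, N (F i)) -> N (\sum_i F i).
Proof.
move=> hN hF; apply: (big_ind N) => //; first exact: sub0 hN.
by move=> x y; apply: subD.
Qed.

Lemma itm_0 (R : comPzRingType) (M : lmodType R) (I : R -> Prop) : ideal_times_module I (0 : M).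
Proof. by exists [::]; rewrite big_nil. Qed.

Lemma itm_add (R : comPzRingType) (M : lmodType R) (I : R -> Prop) (x y : M) :
  ideal_times_module I x -> ideal_times_module I y -> ideal_times_module I (x + y).
Proof.
move=> [s [hs ->]] [t [ht ->]]; exists (s ++ t); rewrite big_cat; split => //.
by elim: s hs => //= p s IH [h1 h2]; split => //; apply: IH.
Qed.

Lemma itm_single (R : comPzRingType) (M : lmodType R) (I : R -> Prop) r (m : M) :
  I r -> ideal_times_module I (r *: m).
Proof. by move=> hr; exists [:: (r, m)]; rewrite big_cons big_nil addr0. Qed.

Lemma itm_ind (R : comPzRingType) (M : lmodType R) (I : R -> Prop) (N : M -> Prop) :
  is_submodule N -> (forall r m, I r -> N (r *: m)) -> forall x, ideal_times_module I x -> N x.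
Proof.
move=> hN h x [s [hs ->]]; elim: s hs => [|p s IH] /= hs; first by rewrite big_nil; apply: sub0 hN.
by case: hs => h1 h2; rewrite big_cons; apply: (subD hN); [apply: h | apply: IH].
Qed.

Lemma itm_scale (R : comPzRingType) (M : lmodType R) (I : R -> Prop) r (x : M) :
  is_ideal I -> ideal_times_module I x -> ideal_times_module I (r *: x).
Proof.
move=> hI [s [hs ->]]; exists [seq (r * p.1, p.2) | p <- s]; split.
  by elim: s hs => //= p s IH [h1 h2]; split; [apply: idlMl | apply: IH].
by rewrite big_map scaler_sumr; apply: eq_bigr => p _ /=; rewrite scalerA.
Qed.

Lemma itm_sub (R : comPzRingType) (M : lmodType R) (I : R -> Prop) :
  is_ideal I -> is_submodule (@ideal_times_module R M I).
Proof.
move=> hI; split; [exact: itm_0 | exact: itm_add |].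
by move=> r x; apply: itm_scale.
Qed.


Section Prod.
Variables (R : comPzRingType) (n : nat) (D : 'I_n -> comNzRingType)
    (pi : forall i : 'I_n, {rmorphism R -> D i}).
Hypothesis pi_inj : forall x : R, (forall i, pi i x = 0) -> x = 0.
Hypothesis pi_surj : forall d : (forall i : 'I_n, D i), exists x : R, forall i, pi i x = d i.
Variable e : 'I_n -> R.
Hypothesis he : forall i j : 'I_n, pi j (e i) = (if i == j then 1 else 0).
Variable M : lmodType R.

Lemma pi_eq x y : (forall j, pi j x = pi j y) -> x = y.
Proof.
move=> h; apply/eqP; rewrite -subr_eq0; apply/eqP; apply: pi_inj => j.
by rewrite rmorphB h subrr.
Qed.

Lemma sum_e : \sum_i e i = 1.
Proof.
apply: pi_eq => j; rewrite rmorph_sum rmorph1 (bigD1 j) //= he eqxx big1 ?addr0 //.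
by move=> i /negbTE hij; rewrite he hij.
Qed.

Lemma pi_me i j r : pi j (r * e i) = if i == j then pi j r else 0.
Proof. by rewrite rmorphM he; case: (i == j); rewrite ?mulr1 ?mulr0. Qed.

Lemma ee i : e i * e i = e i.
Proof. by apply: pi_eq => j; rewrite pi_me he; case: (i == j). Qed.

Lemma pi_surj1 i (d : D i) : exists r, pi i r = d.
Proof.
pose f := fun j : 'I_n => match i =P j with ReflectT h => ecast k (D k) h d | ReflectF _ => 0 end.
have [x hx] := pi_surj f; exists x; rewrite hx /f.
case: (i =P i) => // h; by rewrite (eq_irrelevance h erefl).
Qed.

Lemma lift_e i (d : D i) : exists r, pi i r = d /\ r * e i = r.
Proof.
have [r hr] := pi_surj1 d; exists (r * e i); split; first by rewrite pi_me eqxx.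
by rewrite -mulrA ee.
Qed.

Definition Mi i := @scaled_part R M (e i).

Lemma Mi_e i x : Mi i x <-> e i *: x = x.
Proof.
split; first by case=> m ->; rewrite scalerA ee.
by move=> h; exists x.
Qed.

Lemma decomp (x : M) : x = \sum_i e i *: x.
Proof. by rewrite -scaler_suml sum_e scale1r. Qed.

Lemma Mi_sub i : is_submodule (Mi i).
Proof.
split; first by exists 0; rewrite scaler0.
- by move=> x y [m ->] [m' ->]; exists (m + m'); rewrite scalerDr.
- by move=> r x [m ->]; exists (r *: m); rewrite !scalerA mulrC.
Qed.

Lemma Mi_in i (m : M) : Mi i (e i *: m).
Proof. by exists m. Qed.

Lemma Mi_pi0 i r x : pi i r = 0 -> Mi i x -> r *: x = 0.
Proof.
move=> hr /Mi_e hx; rewrite -hx scalerA.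
have -> : r * e i = 0.
  apply: pi_inj => j; rewrite pi_me; case: eqP => // <-; exact: hr.
by rewrite scale0r.
Qed.

Lemma Mi_pi i r s x : pi i r = pi i s -> Mi i x -> r *: x = s *: x.
Proof.
move=> h hx; apply/eqP; rewrite -subr_eq0 -scalerBl; apply/eqP; apply: (Mi_pi0 (i := i)) => //.
by rewrite rmorphB h subrr.
Qed.

Definition multI (A : comPzRingType) (I : A -> Prop) := forall K, is_ideal K -> (forall x, K x -> I x) ->
  exists L, is_ideal L /\ forall x, K x <-> prodI L I x.
Definition faithI (A : comPzRingType) (I : A -> Prop) := forall d, (forall a, I a -> d * a = 0) -> d = 0.

Lemma iso_f0 i (f : M -> D i) : (forall x y, Mi i x -> Mi i y -> f (x + y) = f x + f y) -> f 0 = 0.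
Proof.
move=> hf; have h0 : Mi i 0 by exists 0; rewrite scaler0.
have := hf 0 0 h0 h0; rewrite addr0 => h; apply: (@addrI _ (f 0)); rewrite addr0; by rewrite -h.
Qed.

Lemma back_dir (H : forall i, exists I : D i -> Prop,
   [/\ is_ideal I, multI I, faithI I & iso_to_ideal (pi i) (Mi i) I]) :
  faithful_module M /\ multiplication_module M.
Proof.
have [Is hIs] : exists Is : (forall i, D i -> Prop), forall i,
   [/\ is_ideal (Is i), multI (Is i), faithI (Is i) & iso_to_ideal (pi i) (Mi i) (Is i)].
  by exists (fun i => sval (constructive_indefinite_description _ (H i))) => i;
     exact: (svalP (constructive_indefinite_description _ (H i))).
have hIso i : iso_to_ideal (pi i) (Mi i) (Is i) by case: (hIs i).
have [fs hfs] : exists fs : (forall i, M -> D i), forall i,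
    [/\ (forall x y, Mi i x -> Mi i y -> fs i (x + y) = fs i x + fs i y),
        (forall r x, Mi i x -> fs i (r *: x) = pi i r * fs i x),
        (forall x y, Mi i x -> Mi i y -> fs i x = fs i y -> x = y),
        (forall x, Mi i x -> Is i (fs i x)) &
        (forall a, Is i a -> exists x, Mi i x /\ fs i x = a)].
  by exists (fun i => sval (constructive_indefinite_description _ (hIso i))) => i;
     exact: (svalP (constructive_indefinite_description _ (hIso i))).
have fs0 i : fs i 0 = 0 by case: (hfs i) => h _ _ _ _; apply: iso_f0 h.
split.
  move=> r hr; apply: pi_inj => i.
  case: (hIs i) => hI _ hfa _; case: (hfs i) => fadd fsc finj fin fsurj.
  apply: hfa => a ha; have [y [hy <-]] := fsurj a ha.
  by rewrite -fsc // hr fs0.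
move=> N hN.
pose K i := fun d : D i => exists x, [/\ N x, Mi i x & fs i x = d].
have hK i : is_ideal (K i).
  case: (hfs i) => fadd fsc finj fin fsurj.
  split.
  - by exists 0; split; [exact: sub0 hN | exact: sub0 (Mi_sub i) | exact: fs0].
  - move=> a b [x [hx hx' <-]] [y [hy hy' <-]]; exists (x + y); split.
    + exact: subD hN hx hy.
    + exact: subD (Mi_sub i) hx' hy'.
    + exact: fadd.
  - move=> d a [x [hx hx' <-]]; have [r <-] := pi_surj1 d; exists (r *: x); split.
    + exact: subZ hN hx.
    + exact: subZ (Mi_sub i) hx'.
    + exact: fsc.
have hKI i : forall d, K i d -> Is i d.
  by move=> d [x [_ hx <-]]; case: (hfs i) => _ _ _ fin _; apply: fin.
have hL i : exists L, is_ideal L /\ forall x, K i x <-> prodI L (Is i) x.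
  by case: (hIs i) => hI hm _ _; apply: hm; [exact: hK | exact: hKI].
have [Ls hLs] : exists Ls : (forall i, D i -> Prop), forall i,
    is_ideal (Ls i) /\ forall x, K i x <-> prodI (Ls i) (Is i) x.
  by exists (fun i => sval (constructive_indefinite_description _ (hL i))) => i;
     exact: (svalP (constructive_indefinite_description _ (hL i))).
pose J := fun r => forall i, Ls i (pi i r).
have hJ : is_ideal J.
  split.
  - by move=> i; rewrite rmorph0; apply: idl0 (hLs i).1.
  - by move=> x y hx hy i; rewrite rmorphD; apply: idlD (hLs i).1 (hx i) (hy i).
  - by move=> a x hx i; rewrite rmorphM; apply: idlMl (hLs i).1 (hx i).
exists J; split => // x; split.
- move=> hx; rewrite (decomp x); apply: (sub_sum (F := fun i => e i *: x) (itm_sub M hJ)) => i.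
  case: (hfs i) => fadd fsc finj fin fsurj.
  pose K' := fun d : D i => exists y', [/\ Mi i y', fs i y' = d & ideal_times_module J y'].
  have hK' : is_ideal K'.
    split.
    - by exists 0; split; [exact: sub0 (Mi_sub i) | exact: fs0 | exact: itm_0].
    - move=> a b [y1 [h1 <- h1']] [y2 [h2 <- h2']]; exists (y1 + y2); split.
      + exact: subD (Mi_sub i) h1 h2.
      + exact: fadd.
      + exact: itm_add.
    - move=> d a [y1 [h1 <- h1']]; have [r <-] := pi_surj1 d; exists (r *: y1); split.
      + exact: subZ (Mi_sub i) h1.
      + exact: fsc.
      + exact: itm_scale.
  have hy : Mi i (e i *: x) := Mi_in i x.
  have : K' (fs i (e i *: x)).
    apply: (prodI_ind hK'); last first.
      apply/(hLs i).2; exists (e i *: x); split => //; exact: subZ hN hx.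
    move=> l a hl ha; have [m [hm <-]] := fsurj a ha.
    have [s [hs hse]] := lift_e l.
    exists (s *: m); split.
    + by apply/Mi_e; rewrite scalerA mulrC hse.
    + by rewrite fsc // hs.
    + apply: itm_single => j; case: (eqVneq i j) => [<-|hij]; first by rewrite hs.
      rewrite -hse pi_me (negbTE hij); exact: idl0 (hLs j).1.
  by case=> y' [h1 h2 h3]; rewrite -(finj _ _ h1 hy h2).
- apply: itm_ind => // r m hr.
  rewrite (decomp (r *: m)); apply: (sub_sum (F := fun i => e i *: (r *: m)) hN) => i.
  case: (hfs i) => fadd fsc finj fin fsurj.
  rewrite scalerA mulrC -scalerA.
  have hz := Mi_in i m.
  have hrz : Mi i (r *: (e i *: m)) := subZ (Mi_sub i) hz.
  have : K i (pi i r * fs i (e i *: m)).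
    by apply/(hLs i).2; apply: prodI_single; [apply: hr | apply: fin].
  case=> y [hy1 hy2 hy3]; rewrite -fsc // in hy3.
  by rewrite -(finj _ _ hy2 hrz hy3).
Qed.

Lemma itm_e0 i (I : R -> Prop) (w : M) : (forall r, I r -> pi i r = 0) -> Mi i w ->
  ideal_times_module I w -> w = 0.
Proof.
move=> hI /Mi_e hw hw'; rewrite -hw.
have hN : is_submodule (fun z : M => e i *: z = 0).
  split; first by rewrite scaler0.
  - by move=> x y hx hy; rewrite scalerDr hx hy addr0.
  - by move=> r x hx; rewrite scalerA mulrC -scalerA hx scaler0.
apply: (itm_ind hN) hw' => r m hr.
have -> : e i *: (r *: m) = (r * e i) *: m by rewrite scalerA mulrC.
have -> : r * e i = 0.
  apply: pi_inj => j; rewrite pi_me; case: eqP => // <-; exact: hI.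
by rewrite scale0r.
Qed.

Lemma Rx_sub (x : M) : is_submodule (fun z => exists s, z = s *: x).
Proof.
split; first by exists 0; rewrite scale0r.
- by move=> u v [s ->] [s' ->]; exists (s + s'); rewrite scalerDl.
- by move=> r u [s ->]; exists (r * s); rewrite scalerA.
Qed.

Lemma torsion i (hdom : integral_domain (D i)) (hF : faithful_module M)
  (hM : multiplication_module M) g (w : M) : pi i g != 0 -> Mi i w -> g *: w = 0 -> w = 0.
Proof.
move=> hg hw hgw.
have [I [hI hIw]] := hM _ (Rx_sub w).
apply: (itm_e0 (i := i) (I := I)) => //; last by apply/hIw; exists 1; rewrite scale1r.
move=> r hr.
have hgr : g * r = 0.
  apply: hF => m.
  have [s hs] : exists s, r *: m = s *: w by apply/hIw; apply: itm_single.
  by rewrite -scalerA hs scalerA mulrC -scalerA hgw scaler0.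
have : pi i g * pi i r = 0 by rewrite -rmorphM hgr rmorph0.
case: hdom => _ hd => h; case: (hd _ _ h) => // hg0.
by move: hg; rewrite hg0 eqxx.
Qed.

Lemma nonzero_Mi i (hF : faithful_module M) : exists x0, Mi i x0 /\ x0 != 0.
Proof.
apply: NNPP => hn.
have he0 : e i = 0.
  apply: hF => m; apply: NNPP => hm; apply: hn; exists (e i *: m); split; first exact: Mi_in.
  by apply/eqP.
have := he i i; rewrite eqxx he0 rmorph0 => /eqP; by rewrite eq_sym oner_eq0.
Qed.

Lemma build_iso i (x0 : M) g : Mi i x0 ->
  (forall y, Mi i y -> exists s, g *: y = s *: x0) ->
  (forall s, s *: x0 = 0 -> pi i s = 0) ->
  (forall y, Mi i y -> g *: y = 0 -> y = 0) ->
  exists f : M -> D i,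
    [/\ (forall x y, Mi i x -> Mi i y -> f (x + y) = f x + f y),
        (forall r x, Mi i x -> f (r *: x) = pi i r * f x),
        (forall x y, Mi i x -> Mi i y -> f x = f y -> x = y) &
        (forall y s, Mi i y -> g *: y = s *: x0 -> f y = pi i s)].
Proof.
move=> hx0 h1 h2 h3.
pose sel y := epsilon (inhabits 0) (fun s => g *: y = s *: x0).
have hsel y : Mi i y -> g *: y = sel y *: x0.
  by move=> hy; apply: (epsilon_spec (inhabits 0) (fun s => g *: y = s *: x0)); apply: h1.
have hf y s : Mi i y -> g *: y = s *: x0 -> pi i (sel y) = pi i s.
  move=> hy hs; apply/eqP; rewrite -subr_eq0 -rmorphB; apply/eqP; apply: h2.
  by rewrite scalerBl -hsel // hs subrr.
exists (fun y => pi i (sel y)); split.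
- move=> x y hx hy; rewrite -rmorphD; apply: hf; first exact: subD (Mi_sub i) hx hy.
  by rewrite scalerDr scalerDl -!hsel.
- move=> r x hx; rewrite -rmorphM; apply: hf; first exact: subZ (Mi_sub i) hx.
  by rewrite scalerA mulrC -scalerA hsel // scalerA.
- move=> x y hx hy hxy.
  have hxy' : Mi i (x - y) by apply: subD (Mi_sub i) hx _; rewrite -scaleN1r; apply: subZ (Mi_sub i) hy.
  apply/eqP; rewrite -subr_eq0; apply/eqP; apply: h3 => //.
  rewrite scalerBr hsel // hsel // (Mi_pi hxy hx0) subrr //.
- by move=> y s hy hs; apply: hf.
Qed.

Lemma cyclic_part i (hart : artinian_local_pir (D i)) (hF : faithful_module M)
  (hM : multiplication_module M) :
  exists x0, Mi i x0 /\ forall y, Mi i y -> exists s, y = s *: x0.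
Proof.
case: hart => hA [m [hm hu]] hP.
have hN := pir_noeth hP.
have hmI : is_ideal m by case: hm.
have [t ht] := hP m hmI.
have [Nn hNn] := nilp_t hA hN hm hu ht.
have [tau htau] := pi_surj1 t.
pose TM := fun z : M => exists y, Mi i y /\ z = tau *: y.
case: (classic (exists x, Mi i x /\ ~ TM x)) => [[x [hx hnx]] | hall].
  have [I [hI hIx]] := hM _ (Rx_sub x).
  pose Jd := fun d : D i => exists r, I r /\ pi i r = d.
  have hJd : is_ideal Jd.
    split; first by exists 0; rewrite rmorph0; split => //; apply: idl0 hI.
    - by move=> a b [r [hr <-]] [s [hs <-]]; exists (r + s); rewrite rmorphD; split => //; apply: idlD hI hr hs.
    - move=> d a [r [hr <-]]; have [s <-] := pi_surj1 d; exists (s * r); rewrite rmorphM; split => //.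
      exact: idlMl hI hr.
  case: (classic (forall d, Jd d -> m d)) => hJm.
    exfalso; apply: hnx.
    have hTM : is_submodule (fun z => TM (e i *: z)).
      split; first by exists 0; rewrite !scaler0; split => //; apply: sub0 (Mi_sub i).
      - move=> u v [y [hy hu']] [y' [hy' hv']]; exists (y + y'); split; first exact: subD (Mi_sub i) hy hy'.
        by rewrite scalerDr hu' hv' scalerDr.
      - move=> r u [y [hy hu']]; exists (r *: y); split; first exact: subZ (Mi_sub i) hy.
        by rewrite scalerA mulrC -scalerA hu' !scalerA mulrC.
    have hgen : forall r m0, I r -> TM (e i *: (r *: m0)).
      move=> r m0 hr.
      have [s0 hs0] : exists s0, pi i r = s0 * t by apply/ht; apply: hJm; exists r.
      have [sg hsg] := pi_surj1 s0.
      exists ((sg * e i) *: m0); split; first by apply/Mi_e; rewrite scalerA mulrCA ee.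
      rewrite !scalerA; congr (_ *: _); apply: pi_eq => j.
      rewrite mulrC pi_me mulrA pi_me; case: eqVneq => [<-|] //.
      by rewrite rmorphM htau hsg hs0 mulrC.
    have hxI : ideal_times_module I x by apply/hIx; exists 1; rewrite scale1r.
    have := itm_ind hTM hgen hxI.
    by move/Mi_e: hx => ->.
  have [d [hd hnd]] : exists d, Jd d /\ ~ m d.
    apply: NNPP => hn; apply: hJm => d hd; apply: NNPP => hnd; apply: hn; by exists d.
  have [r [hr hr1]] := local_units hN hm hu hJd (fun h => hnd (h d hd)).
  exists x; split => // y hy.
  have -> : y = r *: y by rewrite (Mi_pi (s := 1) _ hy) ?scale1r // hr1 rmorph1.
  by apply/hIx; apply: itm_single.
exfalso.
have hk k : forall x, Mi i x -> exists y, Mi i y /\ x = tau ^+ k *: y.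
  elim: k => [|k IH] x hx; first by exists x; rewrite expr0 scale1r.
  have [y [hy ->]] := IH x hx.
  have [y' [hy' ->]] : TM y.
    apply: NNPP => hn; apply: hall; by exists y.
  by exists y'; split => //; rewrite scalerA exprSr.
have [x0 [hx0 hx0n]] := nonzero_Mi i hF.
have [y [hy hxy]] := hk Nn x0 hx0.
move: hx0n; rewrite hxy (Mi_pi0 _ hy) ?eqxx //.
by rewrite rmorphXn htau hNn.
Qed.

Lemma main_sec (hD : forall i, dedekind_domain (D i) \/ artinian_local_pir (D i)) :
  (faithful_module M /\ multiplication_module M) <->
  (forall i : 'I_n,
     iso_to_ideal (pi i) (@scaled_part R M (e i)) (fun _ => True) \/
     (dedekind_domain (D i) /\
      exists I : D i -> Prop, is_ideal I /\ nonzero_ideal I /\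
        iso_to_ideal (pi i) (@scaled_part R M (e i)) I)).
Proof.
split.
- case=> hF hM i; case: (hD i) => hDi.
  + right; split => //.
    have hdom : integral_domain (D i) by case: hDi.
    have [x0 [hx0 hx0n]] := nonzero_Mi i hF.
    have [I [hI hIx]] := hM _ (Rx_sub x0).
    have [rho [hrho hrho0]] : exists rho, I rho /\ pi i rho != 0.
      apply: NNPP => hn; move/eqP: hx0n; apply; apply: (itm_e0 (i := i) (I := I)) => //.
        move=> r hr; apply/eqP; apply: contraT => hr0; case: hn; by exists r.
      by apply/hIx; exists 1; rewrite scale1r.
    have h1 : forall y, Mi i y -> exists s, rho *: y = s *: x0.
      by move=> y hy; apply/hIx; apply: itm_single.
    have h2 : forall s, s *: x0 = 0 -> pi i s = 0.
      move=> s hs; case: (eqVneq (pi i s) 0) => // hs0.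
      by move/eqP: hx0n; case; apply: (torsion hdom hF hM hs0).
    have h3 : forall y, Mi i y -> rho *: y = 0 -> y = 0 := fun y => torsion hdom hF hM (w := y) hrho0.
    have [f [fadd fsc finj fval]] := build_iso hx0 h1 h2 h3.
    have f0 : f 0 = 0 := iso_f0 fadd.
    exists (fun d => exists y, Mi i y /\ f y = d); split; last split.
    * split; first by exists 0; split => //; apply: sub0 (Mi_sub i).
      - move=> a b [y [hy <-]] [y' [hy' <-]]; exists (y + y'); split; first exact: subD (Mi_sub i) hy hy'.
        exact: fadd.
      - move=> d a [y [hy <-]]; have [r <-] := pi_surj1 d; exists (r *: y); split; first exact: subZ (Mi_sub i) hy.
        exact: fsc.
    * exists (pi i rho); split => //; exists x0; split => //; exact: fval.
    * exists f; split => //.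
      - by move=> x hx; exists x; split.
  + left.
    have [x0 [hx0 hcyc]] := cyclic_part hDi hF hM.
    have h1 : forall y, Mi i y -> exists s, 1 *: y = s *: x0.
      by move=> y hy; rewrite scale1r; apply: hcyc.
    have h2 : forall s, s *: x0 = 0 -> pi i s = 0.
      move=> s hs.
      have hse : s * e i = 0.
        apply: hF => m; rewrite -scalerA.
        have [t ->] := hcyc _ (Mi_in i m).
        by rewrite scalerA mulrC -scalerA hs scaler0.
      by have := pi_me i i s; rewrite hse rmorph0 eqxx => <-.
    have h3 : forall y, Mi i y -> 1 *: y = 0 -> y = 0 by move=> y _; rewrite scale1r.
    have [f [fadd fsc finj fval]] := build_iso hx0 h1 h2 h3.
    exists f; split => //.
    move=> a _; have [s [hs hse]] := lift_e a.
    have hy : Mi i (s *: x0) by rewrite -hse mulrC -scalerA; exact: Mi_in.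
    exists (s *: x0); split => //; rewrite -hs; apply: fval => //; by rewrite scale1r.
- move=> H. apply: back_dir => i; case: (H i).
  + move=> hiso; exists (fun _ => True); split => //.
    * move=> K hK _; exists K; split => // x; split.
        by move=> hx; rewrite -[x]mulr1; apply: prodI_single.
      by apply: (prodI_ind (K := K)) => // u v hu _; apply: idlMr hK hu.
    * by move=> d hd; rewrite -[d]mulr1; apply: hd.
  + case=> hded [I [hI [hnz hiso]]]; exists I; split => //.
    * move=> K hK hKI; apply: mult_ideal => //.
    * move=> d hd; have [a [ha an0]] := hnz.
      have [_ hdm] : integral_domain (D i) by case: hded.
      by case: (hdm _ _ (hd a ha)) => // ha0; rewrite ha0 eqxx in an0.
Qed.

End Prod.

Unset Implicit Arguments.

Theorem theorem1p3 (R : comPzRingType) (n : nat) (D : 'I_n -> comNzRingType)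
    (pi : forall i : 'I_n, {rmorphism R -> D i})
    (pi_inj : forall x : R, (forall i, pi i x = 0) -> x = 0)
    (pi_surj : forall d : (forall i : 'I_n, D i), exists x : R, forall i, pi i x = d i)
    (hD : forall i, dedekind_domain (D i) \/ artinian_local_pir (D i))
    (e : 'I_n -> R)
    (he : forall i j : 'I_n, pi j (e i) = (if i == j then 1 else 0))
    (M : lmodType R) :
  (faithful_module M /\ multiplication_module M) <->
  (forall i : 'I_n,
     iso_to_ideal (pi i) (@scaled_part R M (e i)) (fun _ => True) \/
     (dedekind_domain (D i) /\
      exists I : D i -> Prop, is_ideal I /\ nonzero_ideal I /\
        iso_to_ideal (pi i) (@scaled_part R M (e i)) I)).
Proof.
exact: (@main_sec R n D pi pi_inj pi_surj e he M hD).
Qed.
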